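(* Let $n\in\mathbb N$ and let $S$ be a well ordered subsemigroup of the nonnegative part $\{x\in\mathbb R^n\mid x\ge0\}$ of $\mathbb R^n$ with the lexicographic order. Suppose that $S$ has ordinal type $\le\omega^h$ for some $h\in\mathbb N$. Then $S$ has no accumulation point in $\mathbb R^n$ for the Euclidean topology.
   Context: $\omega$ denotes the ordinal type of $\mathbb N$. The lexicographic order on $\mathbb R^n$ compares first coordinates first. *)

(* Defs.v *)
From Stdlib Require Import Reals.
Open Scope R_scope.

(* Points of R^n are represented as functions nat -> R vanishing from index n on. *)
Definition in_Rn (n : nat) (x : nat -> R) : Prop :=
  forall i : nat, (n <= i)%nat -> x i = 0.

Definition vadd (x y : nat -> R) : nat -> R := fun i => x i + y i.
Definition vzero : nat -> R := fun _ => 0.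

Definition eq_n (n : nat) (x y : nat -> R) : Prop :=
  forall i : nat, (i < n)%nat -> x i = y i.

Definition lex_lt (n : nat) (x y : nat -> R) : Prop :=
  exists k : nat, (k < n)%nat /\ (forall i : nat, (i < k)%nat -> x i = y i) /\ x k < y k.

Definition lex_le (n : nat) (x y : nat -> R) : Prop := eq_n n x y \/ lex_lt n x y.

(* Strict lexicographic order on N^h, which has order type omega^h. *)
Definition nlex_lt (h : nat) (u v : nat -> nat) : Prop :=
  exists k : nat, (k < h)%nat /\ (forall i : nat, (i < k)%nat -> u i = v i) /\ (u k < v k)%nat.

Fixpoint sqsum (n : nat) (x : nat -> R) : R :=
  match n with
  | O => 0
  | S m => sqsum m x + x m * x m
  end.

Definition dist_n (n : nat) (x y : nat -> R) : R :=
  sqrt (sqsum n (fun i => x i - y i)).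

Definition nonneg_subsemigroup (n : nat) (S : (nat -> R) -> Prop) : Prop :=
  (forall x, S x -> in_Rn n x) /\
  (forall x, S x -> lex_le n vzero x) /\
  (forall x y, S x -> S y -> S (vadd x y)).

Definition lex_well_ordered (n : nat) (S : (nat -> R) -> Prop) : Prop :=
  forall T : (nat -> R) -> Prop,
    (forall x, T x -> S x) -> (exists x, T x) ->
    exists m, T m /\ forall y, T y -> lex_le n m y.

(* Ordinal type of (S, lex) is <= omega^h: S is order-isomorphic to an
   initial segment of N^h with the lexicographic order (order type omega^h). *)
Definition ordtype_le_omega_pow (n : nat) (S : (nat -> R) -> Prop) (h : nat) : Prop :=
  exists f : (nat -> R) -> (nat -> nat),
    (forall x y, S x -> S y -> lex_lt n x y -> nlex_lt h (f x) (f y)) /\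
    (forall x (v : nat -> nat), S x -> nlex_lt h v (f x) ->
        exists y, S y /\ forall i, (i < h)%nat -> f y i = v i).

Definition accumulation_point (n : nat) (S : (nat -> R) -> Prop) (p : nat -> R) : Prop :=
  in_Rn n p /\
  forall eps : R, 0 < eps ->
    exists x, S x /\ ~ eq_n n x p /\ dist_n n x p < eps.

(* Main.v *)
Require Import Defs.
From Stdlib Require Import Reals Lra Lia Psatz Arith Classical ClassicalEpsilon.
Open Scope R_scope.

Lemma subseq (P : nat -> nat -> Prop) :
  (forall i, exists j, (i < j)%nat /\ P i j) ->
  exists sg : nat -> nat, forall s, (sg s < sg (S s))%nat /\ P (sg s) (sg (S s)).
Proof.
  intros H.
  pose (g := fun i => proj1_sig (constructive_indefinite_description _ (H i))).
  assert (Hg : forall i, (i < g i)%nat /\ P i (g i)).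
  { intro i. unfold g. destruct (constructive_indefinite_description _ (H i)); simpl; auto. }
  exists (fix sg s := match s with O => O | S s' => g (sg s') end).
  intro s. simpl. apply Hg.
Qed.

Lemma sqsum_nonneg n d : 0 <= sqsum n d.
Proof. induction n; simpl; nra. Qed.

Lemma sqsum_term n d i : (i < n)%nat -> d i * d i <= sqsum n d.
Proof.
  induction n; intros Hi; [lia|]. simpl.
  pose proof (sqsum_nonneg n d).
  destruct (Nat.eq_dec i n). subst; nra.
  assert (i < n)%nat by lia. specialize (IHn H0). nra.
Qed.

Lemma sqsum_zero n d : sqsum n d = 0 -> forall i, (i < n)%nat -> d i = 0.
Proof.
  induction n; intros H i Hi; [lia|]. simpl in H.
  pose proof (sqsum_nonneg n d).
  assert (sqsum n d = 0 /\ d n * d n = 0) as [H1 H2] by nra.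
  destruct (Nat.eq_dec i n). subst; nra. apply IHn; auto; lia.
Qed.

Lemma sqsum_ext n d e : (forall i, (i < n)%nat -> d i = e i) -> sqsum n d = sqsum n e.
Proof.
  induction n; intros H; simpl; auto.
  rewrite IHn by (intros; apply H; lia). rewrite H by lia. reflexivity.
Qed.

Lemma dist_pos n x p : ~ eq_n n x p -> 0 < dist_n n x p.
Proof.
  intros H. unfold dist_n. apply sqrt_lt_R0.
  pose proof (sqsum_nonneg n (fun i => x i - p i)).
  destruct (Req_dec (sqsum n (fun i => x i - p i)) 0) as [E|E]; [|lra].
  exfalso; apply H. intros i Hi. pose proof (sqsum_zero _ _ E i Hi). simpl in H1; lra.
Qed.

Lemma dist_lt1 n x p i : dist_n n x p < 1 -> (i < n)%nat -> x i <= p i + 1.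
Proof.
  intros H Hi. unfold dist_n in H.
  set (s := sqsum n (fun i => x i - p i)) in *.
  assert (0 <= s) by apply sqsum_nonneg.
  pose proof (sqrt_sqrt s H0). pose proof (sqrt_pos s).
  assert (s < 1) by nra.
  pose proof (sqsum_term n (fun i => x i - p i) i Hi). fold s in H4. simpl in H4. nra.
Qed.

Lemma dist_eq n x y p : eq_n n x y -> dist_n n x p = dist_n n y p.
Proof.
  intros H. unfold dist_n. f_equal. apply sqsum_ext. intros i Hi. rewrite H; auto.
Qed.
Lemma bounded_max (X : Type) (x0 : X) (g : X -> nat) (c : nat) :
  (forall y, (g y <= c)%nat) -> exists x, forall y, (g y <= g x)%nat.
Proof.
  revert g. induction c; intros g H.
  - exists x0. intros y. specialize (H y). lia.
  - destruct (classic (exists x, g x = S c)) as [[x Hx]|Hn].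
    + exists x. intros y. rewrite Hx. apply H.
    + apply IHc. intros y. specialize (H y).
      assert (g y <> S c) by (intro E; apply Hn; eauto). lia.
Qed.

Lemma no_emb m : ~ exists F : (nat -> nat) -> (nat -> nat),
  forall u v, nlex_lt (S m) u v -> nlex_lt m (F u) (F v).
Proof.
  induction m; intros [F HF].
  - destruct (HF (fun _ => 0%nat) (fun _ => 1%nat)) as [k [Hk _]].
    + exists 0%nat. split; [lia|]. split; [intros; lia| lia].
    + lia.
  - apply IHm.
    set (e1 := fun i : nat => match i with O => 1%nat | _ => 0%nat end).
    set (emb0 := fun (b : nat -> nat) (i : nat) => match i with O => 0%nat | S i' => b i' end).
    set (g := fun b => F (emb0 b) 0%nat).
    assert (Hc : forall b, (g b <= F e1 0)%nat).
    { intros b. destruct (HF (emb0 b) e1) as [k [Hk [Hlt Hkk]]].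
      - exists 0%nat. split; [lia|]. split; [intros; lia|]. simpl. lia.
      - unfold g. destruct k. lia. rewrite Hlt by lia. lia. }
    assert (Hmono : forall b b', nlex_lt (S m) b b' -> (g b <= g b')%nat).
    { intros b b' [k [Hk [Heq Hlt]]].
      destruct (HF (emb0 b) (emb0 b')) as [k' [Hk' [Heq' Hlt']]].
      - exists (S k). split; [lia|]. split.
        + intros [|i] Hi; simpl; auto. apply Heq; lia.
        + simpl. auto.
      - unfold g. destruct k'. lia. rewrite Heq' by lia. lia. }
    destruct (bounded_max _ (fun _ => 0%nat) g _ Hc) as [b0 Hb0].
    set (emb := fun (b : nat -> nat) (i : nat) => (b0 i + b i + match i with O => 1 | _ => 0 end)%nat).
    assert (Hconst : forall b, g (emb b) = g b0).
    { intros b. apply Nat.le_antisymm; auto. apply Hmono.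
      exists 0%nat. split; [lia|]. split; [intros; lia|]. unfold emb. lia. }
    exists (fun b i => F (emb0 (emb b)) (S i)).
    intros b b' [k [Hk [Heq Hlt]]].
    destruct (HF (emb0 (emb b)) (emb0 (emb b'))) as [k' [Hk' [Heq' Hlt']]].
    + exists (S k). split; [lia|]. split.
      * intros [|i] Hi; simpl; auto. unfold emb. rewrite Heq by lia. reflexivity.
      * simpl. unfold emb. lia.
    + destruct k'.
      * exfalso. pose proof (Hconst b). pose proof (Hconst b'). unfold g in *. lia.
      * exists k'. split; [lia|]. split; auto. intros i Hi. apply Heq'. lia.
Qed.
Lemma extract n (Sg : (nat -> R) -> Prop) (Bf : nat -> R) : forall d k, (k + d = n)%nat ->
  forall y : nat -> nat -> R, (forall s, Sg (y s)) -> (forall s, lex_lt n (y s) (y (S s))) ->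
  (forall s i, (i < n)%nat -> y s i <= Bf i) ->
  (forall s i, (i < k)%nat -> y s i = y O i) ->
  exists c (w : nat -> nat -> R), (c < n)%nat /\ (forall s, Sg (w s)) /\
    (forall s i, (i < c)%nat -> w s i = w O i) /\ (forall s, w s c < w (S s) c) /\
    (forall s, w s c <= Bf c).
Proof.
  induction d; intros k Hkd y HS Hlt HB Hc.
  - exfalso. destruct (Hlt O) as [k0 [Hk0 [_ H]]]. rewrite (Hc 1%nat k0) in H by lia. lra.
  - assert (Hm1 : forall s, y s k <= y (S s) k).
    { intros s. destruct (Hlt s) as [k0 [Hk0 [Heq H]]].
      destruct (lt_eq_lt_dec k0 k) as [[L|E]|G].
      - rewrite (Hc s k0), (Hc (S s) k0) in H by lia. lra.
      - subst; lra.
      - rewrite Heq by lia. lra. }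
    assert (Hm : forall s t, (s <= t)%nat -> y s k <= y t k).
    { intros s t Hst. induction Hst. lra. specialize (Hm1 m). lra. }
    destruct (classic (forall t, exists t', (t < t')%nat /\ y t k < y t' k)) as [A|A].
    + destruct (subseq _ A) as [sg Hsg].
      exists k, (fun s => y (sg s)). split; [lia|]. split; [auto|]. split.
      * intros s i Hi. rewrite (Hc (sg s) i Hi), (Hc (sg O) i Hi). auto.
      * split. intros s; apply (proj2 (Hsg s)). intros s; apply HB; lia.
    + apply not_all_ex_not in A. destruct A as [t Ht].
      assert (Hk : forall t', (t < t')%nat -> y t' k = y t k).
      { intros t' Htt. assert (~ y t k < y t' k) by (intro; apply Ht; eauto).
        pose proof (Hm t t' ltac:(lia)). lra. }
      apply (IHd (S k) ltac:(lia) (fun s => y (s + S t)%nat)); auto.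
      * intros s i Hi. simpl. destruct (Nat.eq_dec i k).
        -- subst. rewrite (Hk (s + S t)%nat) by lia. rewrite (Hk (S t)) by lia. auto.
        -- rewrite (Hc _ i), (Hc (S t) i) by lia. auto.
Qed.

Lemma sum_prefix (a b : nat -> R) k : (forall j, (j < k)%nat -> a j = b j) ->
  forall m, (m < k)%nat -> sum_f_R0 a m = sum_f_R0 b m.
Proof.
  intros H m. induction m; intros Hm; simpl. apply H; lia.
  rewrite IHm by lia. rewrite H by lia. auto.
Qed.

Lemma keysum (a b : nat -> R) (k d : nat) (L D : R) :
  (forall j, (j < k)%nat -> a j = b j) -> (forall j, (k < j)%nat -> a j <= L) ->
  (forall j, (k < j)%nat -> D <= b j) ->
  sum_f_R0 a (k + d) - sum_f_R0 b (k + d) <= a k - b k + INR d * (L - D).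
Proof.
  intros Hp HL HD. induction d.
  - rewrite Nat.add_0_r. simpl INR. destruct k; simpl. lra.
    rewrite (sum_prefix a b (S k) Hp k) by lia. lra.
  - rewrite Nat.add_succ_r. simpl sum_f_R0. rewrite S_INR.
    pose proof (HL (S (k + d)) ltac:(lia)). pose proof (HD (S (k + d)) ltac:(lia)). lra.
Qed.
Fixpoint mkHm (H : nat -> nat) (i : nat) : nat :=
  match i with O => H O | S i' => (mkHm H i' + H (S i') + S i')%nat end.

Lemma mkHm_ge H i : (H i <= mkHm H i)%nat /\ (i <= mkHm H i)%nat.
Proof. destruct i; simpl; lia. Qed.

Lemma mkHm_mono H a b : (a <= b)%nat -> (mkHm H a <= mkHm H b)%nat.
Proof. induction 1; simpl; lia. Qed.

Fixpoint idx (Hm : nat -> nat) (u : nat -> nat) (j : nat) : nat :=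
  match j with O => u O | S j' => (Hm (idx Hm u j') + u (S j'))%nat end.

Lemma idx_prefix Hm u u' k : (forall i, (i < k)%nat -> u i = u' i) ->
  forall j, (j < k)%nat -> idx Hm u j = idx Hm u' j.
Proof.
  intros H j. induction j; intros Hj; simpl. apply H; lia.
  rewrite IHj by lia. rewrite H by lia. auto.
Qed.

Lemma idx_k Hm u u' k : (forall i, (i < k)%nat -> u i = u' i) -> (u k < u' k)%nat ->
  (idx Hm u k < idx Hm u' k)%nat.
Proof.
  intros H Hk. destruct k; simpl. auto.
  rewrite (idx_prefix Hm u u' (S k) H k) by lia. lia.
Qed.

Lemma idx_after Hm u k : (forall x, (x <= Hm x)%nat) ->
  forall j, (k < j)%nat -> (Hm (idx Hm u k) <= idx Hm u j)%nat.
Proof.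
  intros Hx j. induction j; intros Hj. lia. simpl.
  destruct (Nat.eq_dec k j). subst. lia.
  specialize (IHj ltac:(lia)). specialize (Hx (idx Hm u j)). lia.
Qed.

Fixpoint T (m : nat) (g : nat -> nat -> R) : nat -> R :=
  match m with O => g O | S m' => vadd (T m' g) (g (S m')) end.

Lemma T_coord m g i : T m g i = sum_f_R0 (fun j => g j i) m.
Proof. induction m; simpl; auto. unfold vadd. rewrite IHm. auto. Qed.

Lemma T_in (Sg : (nat -> R) -> Prop) m g : (forall x y, Sg x -> Sg y -> Sg (vadd x y)) ->
  (forall j, Sg (g j)) -> Sg (T m g).
Proof. intros Ha Hg. induction m; simpl; auto. Qed.

Theorem mainTheorem5 (n : nat) (S : (nat -> R) -> Prop) (h : nat) :
  nonneg_subsemigroup n S ->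
  lex_well_ordered n S ->
  ordtype_le_omega_pow n S h ->
  ~ (exists p : nat -> R, accumulation_point n S p).
Proof.
  intros [HSin [Hnn Hadd]] Hwo [f [Hf _]] [p [Hp Hacc]].
  assert (Hex : forall eps, exists x, 0 < eps -> S x /\ ~ eq_n n x p /\ dist_n n x p < eps).
  { intros eps. destruct (Rlt_dec 0 eps) as [r|r].
    - destruct (Hacc eps r) as [x Hx]. exists x; auto.
    - exists p. intro; lra. }
  pose (G := fun eps => proj1_sig (constructive_indefinite_description _ (Hex eps))).
  assert (HG : forall eps, 0 < eps -> S (G eps) /\ ~ eq_n n (G eps) p /\ dist_n n (G eps) p < eps).
  { intros eps He. unfold G. destruct (constructive_indefinite_description _ (Hex eps)); simpl; auto. }
  pose (z := fix z k := match k with O => G 1 | Datatypes.S k' => G (dist_n n (z k') p) end).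
  assert (Hz : forall k, S (z k) /\ ~ eq_n n (z k) p /\ dist_n n (z k) p < 1).
  { induction k. simpl. apply HG; lra.
    destruct IHk as [a [b c]]. pose proof (dist_pos _ _ _ b) as Hd.
    destruct (HG _ Hd) as [x1 [x2 x3]]. simpl. split; auto. split; auto. lra. }
  assert (Hdec : forall k, dist_n n (z (Datatypes.S k)) p < dist_n n (z k) p).
  { intros k. destruct (Hz k) as [_ [b _]]. pose proof (dist_pos _ _ _ b) as Hd.
    destruct (HG _ Hd) as [_ [_ x3]]. simpl. auto. }
  assert (Hdec2 : forall a b, (a < b)%nat -> dist_n n (z b) p < dist_n n (z a) p).
  { intros a b Hab. induction Hab. apply Hdec. specialize (Hdec m). lra. }
  assert (Hmin : forall i, exists j, (i < j)%nat /\
            (fun i j => forall j', (i < j')%nat -> lex_le n (z j) (z j')) i j).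
  { intros i. destruct (Hwo (fun x => exists j', (i < j')%nat /\ x = z j')) as [m [[j [Hij ->]] Hm]].
    - intros x [j' [_ ->]]. apply Hz.
    - exists (z (Datatypes.S i)), (Datatypes.S i). split; auto.
    - exists j. split; auto. intros j' Hj'. apply Hm. eauto. }
  destruct (subseq _ Hmin) as [sg Hsg].
  pose (y := fun s => z (sg (Datatypes.S s))).
  assert (Hylt : forall s, lex_lt n (y s) (y (Datatypes.S s))).
  { intros s. destruct (Hsg s) as [h1 h2]. destruct (Hsg (Datatypes.S s)) as [h3 _].
    destruct (h2 (sg (Datatypes.S (Datatypes.S s))) ltac:(lia)) as [E|L]; auto.
    exfalso. pose proof (dist_eq n _ _ p E) as E2. pose proof (Hdec2 _ _ h3). unfold y in *. rewrite E2 in H. lra. }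
  destruct (extract n S (fun i => p i + 1) n O ltac:(lia) y) as [c [w [Hcn [HwS [Hwc [Hwinc Hwb]]]]]].
  { intros s. apply Hz. }
  { auto. }
  { intros s i Hi. apply (dist_lt1 n); auto. apply Hz. }
  { intros s i Hi. lia. }
  pose (r := fun s => w s c).
  assert (Hgr : Un_growing r) by (intros s; left; apply Hwinc).
  assert (Hub : has_ub r).
  { exists (p c + 1). intros x [i ->]. apply Hwb. }
  destruct (growing_cv r Hgr Hub) as [l Hl].
  assert (Hrl : forall j, r j < l).
  { intros j. pose proof (growing_ineq r l Hgr Hl (Datatypes.S j)). pose proof (Hwinc j). unfold r in *. lra. }
  assert (Hrm : forall a b, (a <= b)%nat -> r a <= r b).
  { intros a b Hab. induction Hab. lra. pose proof (Hwinc m). unfold r in *. lra. }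
  assert (HH : forall i, exists K, forall j, (K <= j)%nat -> (INR h + 1) * (l - r j) < r (Datatypes.S i) - r i).
  { intros i. pose proof (pos_INR h).
    assert (Hg : 0 < r (Datatypes.S i) - r i) by (pose proof (Hwinc i); unfold r; lra).
    destruct (Hl ((r (Datatypes.S i) - r i) / (INR h + 1))) as [N HN].
    { apply Rdiv_lt_0_compat; lra. }
    exists N. intros j Hj. specialize (HN j Hj). unfold Rdist in HN.
    rewrite Rabs_minus_sym in HN. pose proof (Rle_abs (l - r j)).
    assert (l - r j < (r (Datatypes.S i) - r i) / (INR h + 1)) by lra.
    apply (Rmult_lt_compat_l (INR h + 1)) in H1; [|lra].
    replace ((INR h + 1) * ((r (Datatypes.S i) - r i) / (INR h + 1))) with (r (Datatypes.S i) - r i) in H1 by (field; lra).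
    auto. }
  pose (Hf0 := fun i => proj1_sig (constructive_indefinite_description _ (HH i))).
  assert (HHf : forall i j, (Hf0 i <= j)%nat -> (INR h + 1) * (l - r j) < r (Datatypes.S i) - r i).
  { intros i. unfold Hf0. destruct (constructive_indefinite_description _ (HH i)); simpl; auto. }
  pose (Hm := mkHm Hf0).
  pose (phi := fun u => T h (fun j => w (idx Hm u j))).
  assert (HphiS : forall u, S (phi u)).
  { intros u. apply T_in; auto. }
  assert (Hphi : forall u u', nlex_lt (Datatypes.S h) u u' -> lex_lt n (phi u) (phi u')).
  { intros u u' [k [Hk [Heq Hlt]]]. exists c. split; auto. split.
    - intros i Hi. unfold phi. rewrite !T_coord. apply sum_eq. intros j _.
      rewrite (Hwc _ i Hi), (Hwc (idx Hm u' j) i Hi). auto.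
    - unfold phi. rewrite !T_coord.
      set (i0 := idx Hm u k).
      assert (Hik : (i0 < idx Hm u' k)%nat) by (apply idx_k; auto).
      pose proof (keysum (fun j => r (idx Hm u j)) (fun j => r (idx Hm u' j)) k (h - k) l (r (Hf0 i0))) as KS.
      replace (k + (h - k))%nat with h in KS by lia.
      simpl in KS. unfold r in KS.
      assert (A1 : forall j, (j < k)%nat -> w (idx Hm u j) c = w (idx Hm u' j) c).
      { intros j Hj. rewrite (idx_prefix Hm u u' k Heq j Hj). auto. }
      assert (A2 : forall j, (k < j)%nat -> w (idx Hm u j) c <= l).
      { intros j _. left. apply (Hrl (idx Hm u j)). }
      assert (A3 : forall j, (k < j)%nat -> w (Hf0 i0) c <= w (idx Hm u' j) c).
      { intros j Hj. apply (Hrm (Hf0 i0)).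
        pose proof (idx_after Hm u' k (fun x => proj2 (mkHm_ge Hf0 x)) j Hj).
        pose proof (mkHm_mono Hf0 _ _ (Nat.lt_le_incl _ _ Hik)).
        pose proof (proj1 (mkHm_ge Hf0 i0)). unfold Hm in *. lia. }
      specialize (KS A1 A2 A3).
      pose proof (HHf i0 (Hf0 i0) (le_n _)) as HQ.
      pose proof (Hrm _ _ Hik) as HR. pose proof (Hrl (Hf0 i0)) as HL.
      assert (INR (h - k) <= INR h + 1) by (pose proof (le_INR (h - k) h ltac:(lia)); lra).
      unfold r in *. fold i0 in KS.
      assert (INR (h - k) * (l - w (Hf0 i0) c) <= (INR h + 1) * (l - w (Hf0 i0) c)).
      { apply Rmult_le_compat_r; lra. }
      lra. }
  apply (no_emb h). exists (fun u => f (phi u)).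
  intros u v Huv. apply Hf; auto.
Qed.
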